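(* Let $\mathbb L$ be an infinite set. The family $\mathcal Q=\{Q^<_{AB}: A,B\in\mathbb W,\ |A|<|B|\}\cup\{C(d):d\in\mathbb I\}$, where $Q^<_{AB}=\{i\in\mathbb I:|A_i|<|B_i|\}$ and $C(d)=\{i\in\mathbb I: d\subseteq i\}$, has the finite intersection property. Consequently there is a fine ultrafilter $\mathcal U\supseteq\mathcal Q$ on $\mathbb I$, and for any such $\mathcal U$ the finitely approximable numerosity theory $\preceq_{\mathcal U}$ (defined by $A\preceq_{\mathcal U}B$ iff $\{i\in\mathbb I:|A_i|\le|B_i|\}\in\mathcal U$) satisfies the Weak Hume Principle: for all $A,B\in\mathbb W$, if $A\preceq_{\mathcal U}B$ then there is an injective map $f:A\to B$ (equivalently, $|A|\le|B|$).
   Context: A point over $\mathbb L$ is either an element of $\mathbb L$ or a finite tuple $(x_1,\dots,x_n)$, $n\ge1$, of points over $\mathbb L$ ($\mathbb L$ contains no tuples of points); $P$ is the set of all points; $supp(x)=\{x\}$ for $x\in\mathbb L$ and $supp(x_1,\dots,x_n)=\bigcup_k supp(x_k)$. $\mathbb W$ is the family of finitary point sets: $A\subseteq P$ such that $\{a\in A:supp(a)=i\}$ is finite for every finite $i\subseteq\mathbb L$. $\mathbb I=[\mathbb L]^{<\omega}$ is the set of finite subsets of $\mathbb L$, and $A_i=\{a\in A:supp(a)\subseteq i\}$. A filter on $\mathbb I$ is fine if it contains every cone $C(d)$, $d\in\mathbb I$. *)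

(* Defs.v *)
From mathcomp Require Import all_boot.
From mathcomp Require Import boolp classical_sets cardinality.
Set Implicit Arguments.
Unset Strict Implicit.
Unset Printing Implicit Defensive.
Local Open Scope classical_set_scope.

Section Points.
Variable L : Type.

(* Points over L: atoms of L, or finite tuples (x_1,...,x_n), n >= 1,
   represented as head x_1 followed by the list [x_2; ...; x_n]. *)
Inductive lpoint : Type :=
| Atom : L -> lpoint
| Tup : lpoint -> list lpoint -> lpoint.

Fixpoint supp (p : lpoint) : set L :=
  match p with
  | Atom x => [set x]
  | Tup q qs =>
      supp q `|` (fix go (l : list lpoint) : set L :=
                    match l with
                    | nil => set0
                    | r :: rs => supp r `|` go rs
                    end) qs
  end.

Definition finitary (A : set lpoint) : Prop :=
  forall i : set L, finite_set i -> finite_set [set a | A a /\ supp a = i].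

Definition Idx : Type := {i : set L | finite_set i}.

Definition restr (A : set lpoint) (i : Idx) : set lpoint :=
  [set a | A a /\ supp a `<=` proj1_sig i].

Definition card_leq (A B : set lpoint) : Prop := (A #<= B)%card.
Definition card_lt (A B : set lpoint) : Prop := (A #<= B)%card /\ ~ (B #<= A)%card.

Definition Qlt (A B : set lpoint) : set Idx :=
  [set i | card_lt (restr A i) (restr B i)].
Definition cone (d : Idx) : set Idx :=
  [set i | proj1_sig d `<=` proj1_sig i].

Definition Qfam : set (set Idx) :=
  [set X | (exists A B, [/\ finitary A, finitary B, card_lt A B & X = Qlt A B])
           \/ (exists d, X = cone d)].

Definition num_le (U : set (set Idx)) (A B : set lpoint) : Prop :=
  U [set i | card_leq (restr A i) (restr B i)].

End Points.

Definition fip (T : Type) (F : set (set T)) : Prop :=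
  forall (n : nat) (X : nat -> set T), (forall k, (k < n)%N -> F (X k)) ->
    exists t : T, forall k, (k < n)%N -> X k t.

Definition is_ultrafilter (T : Type) (U : set (set T)) : Prop :=
  [/\ U setT, ~ U set0,
      (forall X Y, U X -> U Y -> U (X `&` Y)),
      (forall X Y, U X -> X `<=` Y -> U Y)
    & (forall X, U X \/ U (~` X))].

Definition fine (L : Type) (U : set (set (Idx L))) : Prop :=
  forall d : Idx L, U (cone d).

(* Main.v *)
Require Import Defs.
From mathcomp Require Import all_boot.
From mathcomp Require Import boolp classical_sets cardinality.
From mathcomp Require Import functions filter.
Local Open Scope classical_set_scope.


Definition injle {T U} (X : set T) (Y : set U) :=
  exists f : T -> U, (forall x, X x -> Y (f x)) /\
    (forall x y, X x -> X y -> f x = f y -> x = y).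

Lemma injle_refl T (X : set T) : injle X X.
Proof. by exists id; split. Qed.

Lemma injle_trans T U V (X : set T) (Y : set U) (Z : set V) :
  injle X Y -> injle Y Z -> injle X Z.
Proof.
move=> [f [fXY fi]] [g [gYZ gi]]; exists (g \o f); split=> [x Xx|x y Xx Xy /= e].
  exact/gYZ/fXY.
by apply: fi => //; apply: gi => //; apply: fXY.
Qed.

Lemma injle_sub T (X Y : set T) : X `<=` Y -> injle X Y.
Proof. by move=> s; exists id; split=> // x /s. Qed.

Lemma graph_fun {T U} (u0 : U) (G : set (T * U)) (D : set T) :
  (forall x, D x -> exists y, G (x, y)) ->
  exists f : T -> U, forall x, D x -> G (x, f x).
Proof.
move=> H.
exists (fun x => match pselect (exists y, G (x, y)) with
                 | left h => projT1 (cid h) | right _ => u0 end).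
move=> x Dx; case: pselect => [h|/(_ (H x Dx))//]; exact: projT2 (cid h).
Qed.

Lemma injle_total {T U} (t0 : T) (u0 : U) (X : set T) (Y : set U) :
  injle X Y \/ injle Y X.
Proof.
pose P := [set G : set (T * U) | G `<=` X `*` Y /\
  (forall x y y', G (x, y) -> G (x, y') -> y = y') /\
  (forall x x' y, G (x, y) -> G (x', y) -> x = x')].
have [G [[GXY [Gf Gi]] Gmax]] : exists A, P A /\ forall B, A `<` B -> ~ P B.
  apply: Zorn_bigcup => F FP Ftot; split; [|split].
  - by move=> [x y] [G FG Gxy]; have [+ _] := FP G FG; apply.
  - move=> x y y' [G1 F1 h1] [G2 F2 h2]; case: (Ftot G1 G2 F1 F2) => s.
    + by have [_ [f _]] := FP G2 F2; exact: f (s _ h1) h2.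
    + by have [_ [f _]] := FP G1 F1; exact: f h1 (s _ h2).
  - move=> x x' y [G1 F1 h1] [G2 F2 h2]; case: (Ftot G1 G2 F1 F2) => s.
    + by have [_ [_ f]] := FP G2 F2; exact: f (s _ h1) h2.
    + by have [_ [_ f]] := FP G1 F1; exact: f h1 (s _ h2).
case: (pselect (forall x, X x -> exists y, G (x, y))) => [hX|].
  left; have [f hf] := @graph_fun _ _ u0 _ _ hX; exists f; split.
    by move=> x Xx; have [] := GXY _ (hf x Xx).
  by move=> x x' Xx Xx' e; apply: (Gi x x' (f x)); [exact: hf|rewrite e; exact: hf].
move=> /existsNP [x0 /not_implyP [Xx0 nx0]]; right.
suff hY : forall y, Y y -> exists x, [set z : U * T | G (z.2, z.1)] (y, x).
  have [g hg] := @graph_fun _ _ t0 _ _ hY; exists g; split.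
    by move=> y Yy; have [] := GXY _ (hg y Yy).
  by move=> y y' Yy Yy' e; apply: (Gf (g y)); [exact: hg|rewrite e; exact: hg].
move=> y Yy; apply: contrapT => ny; apply: (Gmax (G `|` [set (x0, y)])).
  split; first by move=> z Gz; left.
  by move=> h; apply: nx0; exists y; apply: h; right.
split; [|split].
- by move=> z [/GXY//|->].
- move=> x a b [h1|e1] [h2|e2].
  + exact: Gf h1 h2.
  + by case: e2 => e2 _; case: nx0; exists a; rewrite -e2.
  + by case: e1 => e1 _; case: nx0; exists b; rewrite -e1.
  + by case: e1 => _ ->; case: e2 => _ ->.
- move=> a b c [h1|e1] [h2|e2].
  + exact: Gi h1 h2.
  + by case: e2 => _ e2; case: ny; exists a; rewrite -e2.
  + by case: e1 => _ e1; case: ny; exists b; rewrite -e1.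
  + by case: e1 => -> _; case: e2 => -> _.
Qed.

Lemma injle_card T U (u0 : U) (X : set T) (Y : set U) :
  injle X Y <-> (X #<= Y)%card.
Proof.
split.
  move=> [f [fXY fi]].
  have : $|{injfun X >-> Y}|.
    apply/injfunPex; exists f; first by move=> x /fXY.
    by move=> x y /set_mem Xx /set_mem Xy; apply: fi.
  by case=> g; exact: inj_card_le g.
move/card_leP=> [g].
have /injfunPex [h _ hi] : $|{injfun [set: X] >-> [set: Y]}| by squash g.
exists (fun x => match pselect (X x) with
                 | left Xx => val (h (exist _ x (mem_set Xx))) | right _ => u0 end).
split.
  move=> x Xx; case: pselect => // Xx'.
  exact: set_mem (valP (h (exist _ x (mem_set Xx')))).
move=> x y Xx Xy; case: pselect => // Xx'; case: pselect => // Xy' e.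
have := hi (exist _ x (mem_set Xx')) (exist _ y (mem_set Xy')).
by move=> /(_ (mem_set I) (mem_set I)) /(_ (val_inj e)) [].
Qed.


Lemma nat_into T (X : set T) : infinite_set X ->
  exists e : nat -> T, (forall n, X (e n)) /\ injective e.
Proof.
move=> Xi; have [x0 _] := infinite_setN0 Xi.
have := (infiniteP X).1 Xi; rewrite -(@injle_card _ _ x0) => -[e [eX ei]].
by exists e; split=> [n|m n]; [exact: eX|exact: ei].
Qed.

Lemma hessenberg T (X : set T) : infinite_set X ->
  exists p : T -> T -> T, (forall x y, X x -> X y -> X (p x y)) /\
    (forall x y x' y', X x -> X y -> X x' -> X y' -> p x y = p x' y' ->
       x = x' /\ y = y').
Proof.
move=> Xi; have [e [eX ei]] := nat_into _ _ Xi.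
pose pn m n := CodeSeq.code [:: m; n].
have pni m n m' n' : pn m n = pn m' n' -> m = m' /\ n = n'.
  by move=> /(congr1 CodeSeq.decode); rewrite /pn !CodeSeq.codeK => -[-> ->].
pose G0 := [set q : (T * T) * T | exists m n, q = ((e m, e n), e (pn m n))].
pose Yd (G : set ((T * T) * T)) := [set x | exists z, G ((x, x), z)].
pose good (G : set ((T * T) * T)) := G0 `<=` G /\
  (forall q z z', G (q, z) -> G (q, z') -> z = z') /\
  (forall q q' z, G (q, z) -> G (q', z) -> q = q') /\
  (forall x y z, G ((x, y), z) -> [/\ Yd G x, Yd G y & Yd G z]) /\
  (forall x y, Yd G x -> Yd G y -> exists z, G ((x, y), z)) /\ Yd G `<=` X.
have YdG0 x : Yd G0 x -> exists m, x = e m.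
  by move=> [z [m [n [-> _ _]]]]; exists m.
have goodG0 : good G0.
  refine (conj _ (conj _ (conj _ (conj _ (conj _ _))))).
  - done.
  - move=> q z z' [m [n eq1]] [m' [n' eq2]].
    by move: eq2; case: eq1 => -> ->; case=> /ei -> /ei -> ->.
  - move=> q q' z [m [n eq1]] [m' [n' eq2]].
    move: eq2; case: eq1 => -> ->; case=> -> /ei /pni [-> ->] //.
  - move=> x y z [m [n eq1]]; case: eq1 => -> -> ->; split.
    + by exists (e (pn m m)); exists m, m.
    + by exists (e (pn n n)); exists n, n.
    + by exists (e (pn (pn m n) (pn m n))); exists (pn m n), (pn m n).
  - move=> x y /YdG0 [m ->] /YdG0 [n ->]; exists (e (pn m n)); by exists m, n.
  - by move=> x /YdG0 [m ->].
have [G [PG Gmax]] : exists A, [set G | G = set0 \/ good G] A /\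
    forall B, A `<` B -> ~ [set G | G = set0 \/ good G] B.
  apply: (Zorn_bigcup) => F FP Ftot.
  case: (pselect (exists G q, F G /\ G q)) => [[G1 [q1 [FG1 G1q]]]|none]; last first.
    left; apply/seteqP; split=> // q [G FG Gq]; exfalso; apply: (none).
    by exists G, q.
  have fgood G q : F G -> G q -> good G.
    by move=> FG Gq; case: (FP G FG) => // G0e; move: Gq; rewrite G0e.
  right; refine (conj _ (conj _ (conj _ (conj _ (conj _ _))))).
  - move=> q h; exists G1 => //; have [s [_ [_ [_ [_ _]]]]] := fgood _ _ FG1 G1q.
    exact: s.
  - move=> q z z' [Ga Fa ha] [Gb Fb hb]; case: (Ftot Ga Gb Fa Fb) => s.
    + by have [_ [f [_ [_ [_ _]]]]] := fgood _ _ Fb hb; exact: f (s _ ha) hb.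
    + by have [_ [f [_ [_ [_ _]]]]] := fgood _ _ Fa ha; exact: f ha (s _ hb).
  - move=> q q' z [Ga Fa ha] [Gb Fb hb]; case: (Ftot Ga Gb Fa Fb) => s.
    + by have [_ [_ [f [_ [_ _]]]]] := fgood _ _ Fb hb; exact: f (s _ ha) hb.
    + by have [_ [_ [f [_ [_ _]]]]] := fgood _ _ Fa ha; exact: f ha (s _ hb).
  - move=> x y z [G FG h]; have [_ [_ [_ [c [_ _]]]]] := fgood _ _ FG h.
    have [[z1 h1] [z2 h2] [z3 h3]] := c _ _ _ h.
    by split; [exists z1; exists G|exists z2; exists G|exists z3; exists G].
  - move=> x y [z1 [Ga Fa ha]] [z2 [Gb Fb hb]]; case: (Ftot Ga Gb Fa Fb) => s.
    + have [_ [_ [_ [_ [t _]]]]] := fgood _ _ Fb hb.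
      have [z hz] := t x y (ex_intro _ z1 (s _ ha)) (ex_intro _ z2 hb).
      by exists z, Gb.
    + have [_ [_ [_ [_ [t _]]]]] := fgood _ _ Fa ha.
      have [z hz] := t x y (ex_intro _ z1 ha) (ex_intro _ z2 (s _ hb)).
      by exists z, Ga.
  - move=> x [z [G FG h]]; have [_ [_ [_ [_ [_ sX]]]]] := fgood _ _ FG h.
    by apply: (sX); exists z.
have {PG} [sG0 [Gf [Gi [Gc [Gt GX]]]]] : good G.
  case: PG => // G0e; exfalso; apply: (Gmax G0); last by right.
  rewrite G0e; split=> // h.
  by have := h ((e 0, e 0), e (pn 0 0)) (ex_intro _ 0 (ex_intro _ 0 erefl)).
set Y := Yd G.
have Ye n : Y (e n) by exists (e (pn n n)); apply: (sG0); exists n, n.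
have [pf hpf] : exists pf : T * T -> T, forall q, (Y `*` Y) q -> G (q, pf q).
  apply: (@graph_fun _ _ (e 0) G (Y `*` Y)) => -[x y] [Yx Yy].
  exact: Gt x y Yx Yy.
have pfY x y : Y x -> Y y -> Y (pf (x, y)).
  by move=> Yx Yy; have [] := Gc _ _ _ (hpf (x, y) (conj Yx Yy)).
have pfi q q' : (Y `*` Y) q -> (Y `*` Y) q' -> pf q = pf q' -> q = q'.
  move=> Yq Yq' eq; apply: (Gi q q' (pf q)); first exact: hpf.
  by rewrite eq; exact: hpf.
have notle : ~ injle Y (X `\` Y).
  move=> [g [gYX gi]].
  pose Z := [set z | exists2 y, Y y & g y = z].
  have [gv hgv] : exists gv : T -> T, forall z, Z z -> [set q : T * T | Y q.2 /\ g q.2 = q.1] (z, gv z).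
    apply: (@graph_fun _ _ (e 0) [set q : T * T | Y q.2 /\ g q.2 = q.1] Z).
    by move=> z [y Yy gy]; exists y.
  have ZnY z : Z z -> ~ Y z by move=> [y Yy <-]; have [] := gYX y Yy.
  have ZX z : Z z -> X z by move=> [y Yy <-]; have [] := gYX y Yy.
  pose r u := if pselect (Y u) is left _ then u else gv u.
  have rY u : Y u \/ Z u -> Y (r u).
    rewrite /r; case: pselect => // nY [//|Zu]; by have [] := hgv u Zu.
  have rinj u u' : Y u \/ Z u -> Y u' \/ Z u' -> (Y u <-> Y u') -> r u = r u' -> u = u'.
    rewrite /r => hu hu' iff; case: pselect => Yu; case: pselect => Yu' //.
    - by case: Yu'; apply/iff.
    - by case: Yu; apply/iff.
    - move=> eq; case: hu => // Zu; case: hu' => // Zu'.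
      have [_ /= e1] := hgv u Zu; have [_ /= e2] := hgv u' Zu'.
      by rewrite -e1 -e2 eq.
  pose tg u v := e (if pselect (Y u) is left _ then 0
                    else if pselect (Y v) is left _ then 1 else 2).
  have tgY u v : Y (tg u v) by apply: (Ye).
  have tgi u v u' v' : ~ (Y u /\ Y v) -> ~ (Y u' /\ Y v') ->
      tg u v = tg u' v' -> (Y u <-> Y u') /\ (Y v <-> Y v').
    rewrite /tg => n1 n2 /ei.
    case: (pselect (Y u)) => a; case: (pselect (Y v)) => b;
    case: (pselect (Y u')) => c; case: (pselect (Y v')) => d eq;
    try discriminate eq; tauto.
  pose h u v := g (pf (tg u v, pf (r u, r v))).
  have hZ u v : Y u \/ Z u -> Y v \/ Z v -> Z (h u v).
    move=> hu hv; exists (pf (tg u v, pf (r u, r v))); last by [].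
    apply: (pfY); first exact: tgY.
    by apply: (pfY); apply: (rY).
  pose N := [set q : (T * T) * T | (Y q.1.1 \/ Z q.1.1) /\ (Y q.1.2 \/ Z q.1.2) /\
      ~ (Y q.1.1 /\ Y q.1.2) /\ q.2 = h q.1.1 q.1.2].
  pose G' := G `|` N.
  have YdG' x : Yd G' x <-> Y x \/ Z x.
    split.
      move=> [z [Gq|[a _]]] //; left; by exists z.
    case=> [[z Gz]|Zx]; first by exists z; left.
    exists (h x x); right; split; [by right|split; [by right|split=> //]].
    by move=> [/ZnY].
  apply: (Gmax G'); last right.
    split; first by move=> q Gq; left.
    move=> sub; have [y0 _] : exists y, Y y := ex_intro _ (e 0) (Ye 0).
    have Zz : Z (g (e 0)) by exists (e 0).
    have : G ((g (e 0), g (e 0)), h (g (e 0)) (g (e 0))).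
      apply: (sub); right; split; [by right|split; [by right|split=> //]].
      by move=> [/ZnY].
    by move=> /Gc [Yz _ _]; apply: (ZnY _ Zz).
  refine (conj _ (conj _ (conj _ (conj _ (conj _ _))))).
  - by move=> q /sG0 ?; left.
  - move=> [u v] z z' [h1|[_ [_ [n1 e1]]]] [h2|[_ [_ [n2 e2]]]] /=.
    + exact: Gf h1 h2.
    + by have [Yu Yv _] := Gc _ _ _ h1; case: n2; split.
    + by have [Yu Yv _] := Gc _ _ _ h2; case: n1; split.
    + by simpl in e1, e2; rewrite e1 e2.
  - move=> [u v] [u' v'] z [h1|[a1 [b1 [n1 e1]]]] [h2|[a2 [b2 [n2 e2]]]] /=.
    + exact: Gi h1 h2.
    + have [_ _ Yz] := Gc _ _ _ h1; simpl in e2; exfalso.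
      by apply: (ZnY z) => //; rewrite e2; apply: (hZ).
    + have [_ _ Yz] := Gc _ _ _ h2; simpl in e1; exfalso.
      by apply: (ZnY z) => //; rewrite e1; apply: (hZ).
    + simpl in *; move: e2; rewrite e1 => /gi.
      have Yh a b : Y a \/ Z a -> Y b \/ Z b -> Y (pf (tg a b, pf (r a, r b))).
        by move=> ha hb; apply: (pfY) => //; apply: (pfY); apply: (rY).
      move=> /(_ (Yh _ _ a1 b1) (Yh _ _ a2 b2)) /pfi.
      have H1 : (Y `*` Y) (tg u v, pf (r u, r v)).
        by split; [apply: (tgY)|apply: (pfY); apply: (rY)].
      have H2 : (Y `*` Y) (tg u' v', pf (r u', r v')).
        by split; [apply: (tgY)|apply: (pfY); apply: (rY)].
      move=> /(_ H1 H2) [] /(tgi _ _ _ _ n1 n2) [iu iv] /pfi.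
      move=> /(_ (conj (rY _ a1) (rY _ b1)) (conj (rY _ a2) (rY _ b2))) [].
      by move=> /(rinj _ _ a1 a2 iu) -> /(rinj _ _ b1 b2 iv) ->.
  - move=> x y z [h1|[a [b [n ez]]]].
    + have [[z1 ?] [z2 ?] [z3 ?]] := Gc _ _ _ h1.
      by split; [exists z1|exists z2|exists z3]; left.
    + simpl in *; split; apply/YdG'; [exact: a|exact: b|right; rewrite ez; exact: hZ].
  - move=> x y /YdG' hx /YdG' hy.
    case: (pselect (Y x /\ Y y)) => [[Yx Yy]|nxy].
      by have [z hz] := Gt x y Yx Yy; exists z; left.
    by exists (h x y); right.
  - by move=> x /YdG' [Yx|Zx]; [apply: (GX)|apply: (ZX)].
have [k [kY ki]] : injle (X `\` Y) Y.
  by case: (injle_total (e 0) (e 0) (X `\` Y) Y).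
pose m x := if pselect (Y x) is left _ then pf (e 0, x) else pf (e 1, k x).
have mY x : X x -> Y (m x).
  rewrite /m; case: pselect => Yx Xx; apply: (pfY) => //; exact: kY.
have pfi' x y x' y' : Y x -> Y y -> Y x' -> Y y' -> pf (x, y) = pf (x', y') ->
    x = x' /\ y = y'.
  by move=> a b c d e1; case: (pfi (x, y) (x', y') (conj a b) (conj c d) e1) => -> ->.
have mi x x' : X x -> X x' -> m x = m x' -> x = x'.
  rewrite /m => Xx Xx'; case: pselect => Yx; case: pselect => Yx'.
  - by move=> /(pfi' _ _ _ _ (Ye 0) Yx (Ye 0) Yx') [_ ->].
  - by move=> /(pfi' _ _ _ _ (Ye 0) Yx (Ye 1) (kY x' (conj Xx' Yx'))) [/ei].
  - by move=> /(pfi' _ _ _ _ (Ye 1) (kY x (conj Xx Yx)) (Ye 0) Yx') [/ei].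
  - move=> /(pfi' _ _ _ _ (Ye 1) (kY x (conj Xx Yx)) (Ye 1) (kY x' (conj Xx' Yx'))).
    by move=> [_ /ki]; apply.
exists (fun x y => pf (m x, m y)); split.
  by move=> x y Xx Xy; apply: (GX); apply: (pfY); apply: (mY).
move=> x y x' y' Xx Xy Xx' Xy'.
move=> /(pfi' _ _ _ _ (mY x Xx) (mY y Xy) (mY x' Xx') (mY y' Xy')) [].
by move=> /mi -> // /mi ->.
Qed.


Fixpoint inl {T} (x : T) (s : seq T) : Prop :=
  if s is y :: s' then y = x \/ inl x s' else False.

Lemma finite_enum T (A : set T) : finite_set A ->
  exists s : seq T, forall x, A x <-> inl x s.
Proof.
move=> [n]; elim: n A => [|n IH] A.
  rewrite II0 card_eq0 => /eqP ->; exists [::] => x; split => //.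
move=> /eq_cardSP [x Ax /IH [s hs]]; exists (x :: s) => y; split.
  move=> Ay; case: (pselect (y = x)) => [->|ne]; [by left|right].
  by apply/hs; split.
by case=> [<-|/hs [Ay _]].
Qed.


Lemma enum_fun T : exists en : set T -> seq T,
  forall A, finite_set A -> forall x, A x <-> inl x (en A).
Proof.
have H : forall A : set T, exists s : seq T,
    finite_set A -> forall x, A x <-> inl x s.
  move=> A; case: (pselect (finite_set A)) => [/finite_enum [s hs]|nf].
    by exists s.
  by exists [::].
by have [en hen] := choice H; exists en.
Qed.

Lemma In_nth_err T (s : seq T) x : inl x s -> exists j, onth s j = Some x.
Proof.
elim: s => [//|y s IH] /= [->|/IH [j hj]]; first by exists 0.
by exists j.+1.
Qed.

Lemma finite_powerset T (W : set T) : finite_set W ->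
  finite_set [set F | F `<=` W].
Proof.
move=> [n]; elim: n W => [|n IH] W.
  rewrite II0 card_eq0 => /eqP ->.
  rewrite (_ : [set F | F `<=` set0] = [set set0]); first exact: finite_set1.
  by apply/seteqP; split=> F /=; [rewrite subset0|move=> ->].
move=> /eq_cardSP [x Wx /IH fin].
apply: (sub_finite_set (B := [set F | F `<=` W `\ x] `|`
   (fun G => x |` G) @` [set F | F `<=` W `\ x])).
  move=> F FW; case: (pselect (F x)) => Fx.
    right; exists (F `\ x); first by move=> y [/FW ? ?]; split.
    exact: setD1K.
  by left; move=> y Fy; split; [exact: FW|move=> yx; apply: Fx; rewrite -yx].
by rewrite finite_setU; split=> //; apply: finite_image.
Qed.


Fixpoint lp_ind (L : Type) (P : lpoint L -> Prop) (Ha : forall x, P (Atom x))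
  (Ht : forall q qs, P q -> foldr (fun r acc => P r /\ acc) True qs -> P (Tup q qs)) (p : lpoint L) : P p :=
  match p with
  | Atom x => Ha x
  | Tup q qs => Ht q qs (lp_ind L P Ha Ht q)
      ((fix go (l : list (lpoint L)) : foldr (fun r acc => P r /\ acc) True l :=
          match l with
          | nil => I
          | r :: rs => conj (lp_ind L P Ha Ht r) (go rs)
          end) qs)
  end.

Lemma supp_fin (L : Type) (p : lpoint L) : finite_set (supp p).
Proof.
elim/lp_ind: p => [x|q qs Hq Hqs]; first exact: finite_set1.
elim: qs Hqs q Hq => [|r rs IH] /= Hqs q Hq; first by rewrite setU0.
case: Hqs => Hr Hrs.
rewrite finite_setU; split => //; exact: IH.
Qed.



Lemma restr_fin L (A : set (lpoint L)) (i : Idx L) : finitary A -> finite_set (restr A i).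
Proof.
move=> HA; have fi := proj2_sig i.
apply: (sub_finite_set (B := \bigcup_(j in [set F | F `<=` proj1_sig i])
   [set a | A a /\ supp a = j])).
  by move=> a [Aa sa]; exists (supp a).
apply: bigcup_finite; first exact: finite_powerset.
by move=> j hj; apply: HA; exact: sub_finite_set hj fi.
Qed.

Lemma injle_finite T U (u0 : U) (X : set T) (Y : set U) :
  injle X Y -> finite_set Y -> finite_set X.
Proof. by move=> /(injle_card _ _ u0); apply: card_le_finite. Qed.

Lemma inl_nth T (d : T) s x : inl x s -> exists i, nth d s i = x.
Proof.
elim: s => [//|y s IH] /= [->|/IH [i hi]]; first by exists 0.
by exists i.+1.
Qed.

Lemma inl_map T U (f : T -> U) s y : inl y (map f s) -> exists x, inl x s /\ y = f x.
Proof.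
elim: s => [//|x s IH] /= [<-|/IH [z [hz ->]]]; first by exists x; split=> //; left.
by exists z; split=> //; right.
Qed.

Lemma map_inj_in T U (P : set T) (f : T -> U) s t :
  (forall x y, P x -> P y -> f x = f y -> x = y) ->
  (forall x, inl x s -> P x) -> (forall x, inl x t -> P x) ->
  map f s = map f t -> s = t.
Proof.
move=> fi; elim: s t => [|x s IH] [|y t] //= hs ht [exy est].
have -> : x = y by apply: fi exy; [apply: hs; left|apply: ht; left].
congr cons; apply: IH est.
- by move=> z hz; apply: hs; right.
- by move=> z hz; apply: ht; right.
Qed.

Lemma max_in T (t0 : T) (As : seq (set T)) : (exists A, inl A As) ->
  exists Am, inl Am As /\ forall A, inl A As -> injle A Am.
Proof.
elim: As => [[]//|A As IH] _.
case: (pselect (exists A, inl A As)) => [/IH [Am [iAm hAm]]|none].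
  case: (injle_total t0 t0 A Am) => h.
    exists Am; split; first by right.
    by move=> B /= [<-|/hAm].
  exists A; split; first by left.
  by move=> B /= [<-|/hAm hB]; [exact: injle_refl|exact: injle_trans hB h].
exists A; split; first by left.
move=> B /= [<-|iB]; first exact: injle_refl.
by case: none; exists B.
Qed.

Definition Wof L (As : seq (set (lpoint L))) : set L :=
  [set x | exists A, inl A As /\ exists a, A a /\ supp a x].
Arguments Wof {L} As.

Lemma Wof_fin L (As : seq (set (lpoint L))) :
  (forall A, inl A As -> finite_set A) -> finite_set (Wof As).
Proof.
elim: As => [|A As IH] hA.
  have -> : Wof (@nil (set (lpoint L))) = set0.
    by apply/seteqP; split=> x // [? []].
  exact: finite_set0.
apply: (sub_finite_set (B := (\bigcup_(a in A) supp a) `|` Wof As)).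
  move=> x [B [/= [<-|iB] [a [Ba sa]]]]; first by left; exists a.
  by right; exists B; split=> //; exists a.
rewrite finite_setU; split.
  by apply: bigcup_finite; [apply: hA; left|move=> a _; exact: supp_fin].
by apply: IH => B iB; apply: hA; right.
Qed.


Lemma pigeon L (As : seq (set (lpoint L))) (B : set (lpoint L)) :
  infinite_set B -> (forall A, inl A As -> ~ injle B A) ->
  exists F, finite_set F /\ infinite_set [set b | B b /\ supp b `&` Wof As = F].
Proof.
move=> Binf nle; apply: (contrapT) => H.
pose W := Wof As.
pose cls F := [set b | B b /\ supp b `&` W = F].
have Hcl F : finite_set F -> finite_set (cls F).
  by move=> fF; apply: (contrapT) => nf; apply: (H); exists F.
have [b0 Bb0] := infinite_setN0 Binf.
have finSW b : finite_set (supp b `&` W) by apply: (finite_setIl); exact: supp_fin.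
case: (pselect (forall A, inl A As -> finite_set A)) => [allfin|].
  have fW := Wof_fin _ _ allfin.
  apply: (Binf).
  apply: (sub_finite_set (B := \bigcup_(F in [set F | F `<=` W]) cls F)).
    by move=> b Bb; exists (supp b `&` W) => //; apply: (subIsetr).
  apply: (bigcup_finite); first exact: finite_powerset.
  by move=> F hF; apply: (Hcl); exact: sub_finite_set hF fW.
move=> /existsNP [A0 /not_implyP [inA0 A0inf]].
have [Am [iAm hAm]] := max_in _ b0 _ (ex_intro _ A0 inA0).
apply: (nle Am iAm).
have Xinf : infinite_set Am.
  by move=> fAm; apply: (A0inf); exact: injle_finite _ _ b0 _ _ (hAm _ inA0) fAm.
set X := Am in Xinf hAm *.
have [p [pX pi]] := hessenberg _ _ Xinf.
have [e [eX ei]] := nat_into _ _ Xinf.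
have [fa hfa] : exists fa : set (lpoint L) -> lpoint L -> lpoint L, forall A,
    inl A As -> (forall a, A a -> X (fa A a)) /\
      (forall a a', A a -> A a' -> fa A a = fa A a' -> a = a').
  have H1 : forall A : set (lpoint L), exists f : lpoint L -> lpoint L, inl A As ->
      (forall a, A a -> X (f a)) /\
      (forall a a', A a -> A a' -> f a = f a' -> a = a').
    move=> A; case: (pselect (inl A As)) => [iA|niA]; last by exists id.
    by have [f hf] := hAm A iA; exists f.
  by have [fa hfa] := choice H1; exists fa.
have [en hen] := enum_fun L.
have [cx hcx] : exists cx : L -> nat * lpoint L * nat, forall x, W x ->
    [/\ inl (nth set0 As (cx x).1.1) As, (nth set0 As (cx x).1.1) (cx x).1.2 &
        onth (en (supp (cx x).1.2)) (cx x).2 = Some x].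
  have H1 : forall x, exists c : nat * lpoint L * nat, W x ->
    [/\ inl (nth set0 As c.1.1) As, (nth set0 As c.1.1) c.1.2 &
        onth (en (supp c.1.2)) c.2 = Some x].
    move=> x; case: (pselect (W x)) => [[A [iA [a [Aa sa]]]]|nW]; last first.
      by exists (0, b0, 0).
    have [i hi] := inl_nth _ set0 _ _ iA.
    have /(In_nth_err _ _ _) [j hj] : inl x (en (supp a)) by apply/hen => //; exact: supp_fin.
    by exists (i, a, j) => _ /=; rewrite hi.
  by have [cx hcx] := choice H1; exists cx.
pose ac x := p (e (cx x).1.1) (p (fa (nth set0 As (cx x).1.1) (cx x).1.2) (e (cx x).2)).
have acX x : W x -> X (ac x).
  move=> Wx; have [i1 i2 _] := hcx x Wx; apply: (pX) => //; apply: (pX) => //.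
  by have [+ _] := hfa _ i1; apply.
have aci x x' : W x -> W x' -> ac x = ac x' -> x = x'.
  move=> Wx Wx'; have [i1 i2 i3] := hcx x Wx; have [i1' i2' i3'] := hcx x' Wx'.
  have [fX finj] := hfa _ i1; have [fX' _] := hfa _ i1'.
  have Xf := fX _ i2; have Xf' := fX' _ i2'.
  move=> /(pi _ _ _ _ (eX _) (pX _ _ Xf (eX _)) (eX _) (pX _ _ Xf' (eX _))).
  move=> [/ei eqi /(pi _ _ _ _ Xf (eX _) Xf' (eX _)) [eqf /ei eqj]].
  rewrite -eqi in eqf i2'.
  have eqa := finj _ _ i2 i2' eqf.
  by move: i3'; rewrite -eqa -eqj i3 => -[].
pose fix pc (s : seq (lpoint L)) := if s is x :: s' then p x (pc s') else e 0.
pose code s := p (e (size s)) (pc s).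
have pcX s : (forall x, inl x s -> X x) -> X (pc s).
  elim: s => [|x s IH] hs /=; first exact: eX.
  by apply: (pX); [apply: (hs); left|apply: (IH) => y hy; apply: (hs); right].
have codeX s : (forall x, inl x s -> X x) -> X (code s).
  by move=> hs; apply: (pX) => //; apply: (pcX).
have codei s t : (forall x, inl x s -> X x) -> (forall x, inl x t -> X x) ->
    code s = code t -> s = t.
  move=> hs ht /pi [] //; try exact: pcX.
  move=> /ei; elim: s t hs ht => [|x s IH] [|y t] //= hs ht [esz] /pi [] //.
  - by apply: (hs); left.
  - by apply: (pcX) => z hz; apply: (hs); right.
  - by apply: (ht); left.
  - by apply: (pcX) => z hz; apply: (ht); right.
  move=> -> /(IH t) -> //.
  - by move=> z hz; apply: (hs); right.
  - by move=> z hz; apply: (ht); right.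
have [enl henl] := enum_fun L.
pose ccode b := code (map ac (enl (supp b `&` W))).
have enlW b x : inl x (enl (supp b `&` W)) -> W x.
  by move=> /(henl _ (finSW b)) [].
have ccodeX b : X (ccode b).
  apply: (codeX) => y /(inl_map _ _ _ _ _) [x [hx ->]]; apply: (acX); exact: enlW hx.
have ccodei b b' : ccode b = ccode b' -> supp b `&` W = supp b' `&` W.
  have hX c : forall y, inl y (map ac (enl (supp c `&` W))) -> X y.
    by move=> y /(inl_map _ _ _ _ _) [x [hx ->]]; apply: (acX); exact: enlW hx.
  move=> /(codei _ _ (hX b) (hX b')) /(map_inj_in _ _ W ac _ _ aci) eq.
  have {}eq := eq (enlW b) (enlW b').
  apply/seteqP; split=> x hx.
    by apply/(henl _ (finSW b')); rewrite -eq; apply/(henl _ (finSW b)).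
  by apply/(henl _ (finSW b)); rewrite eq; apply/(henl _ (finSW b')).
have [enb henb] := enum_fun (lpoint L).
have [jb hjb] : exists jb : lpoint L -> nat, forall b, B b ->
    onth (enb (cls (supp b `&` W))) (jb b) = Some b.
  have H1 : forall b, exists j, B b -> onth (enb (cls (supp b `&` W))) j = Some b.
    move=> b; case: (pselect (B b)) => [Bb|nB]; last by exists 0.
    have : inl b (enb (cls (supp b `&` W))).
      by apply/(henb _ (Hcl _ (finSW b))); split.
    by move=> /(In_nth_err _ _ _) [j hj]; exists j.
  by have [jb hjb] := choice H1; exists jb.
exists (fun b => p (ccode b) (e (jb b))); split.
  by move=> b Bb; apply: (pX).
move=> b b' Bb Bb' /(pi _ _ _ _ (ccodeX b) (eX _) (ccodeX b') (eX _)).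
move=> [/ccodei eF /ei ej].
by move: (hjb b' Bb'); rewrite -eF -ej (hjb b Bb) => -[].
Qed.


Lemma inl_split T (x : T) s : inl x s -> exists s1 s2, s = s1 ++ x :: s2.
Proof.
elim: s => [//|y s IH] /= [->|/IH [s1 [s2 ->]]]; first by exists [::], s.
by exists (y :: s1), s2.
Qed.

Lemma inl_cat T (x : T) s1 s2 : inl x (s1 ++ s2) <-> inl x s1 \/ inl x s2.
Proof.
elim: s1 => [|y s1 IH] /=; first by split=> [h|[]//]; right.
by rewrite IH; split=> [[h|[h|h]]|[[h|h]|h]]; tauto.
Qed.

Lemma inl_map_in T U (f : T -> U) x s : inl x s -> inl (f x) (map f s).
Proof. by elim: s => [//|y s IH] /= [->|/IH h]; [left|right]. Qed.

Lemma card_lt_mono L (A A' B B' : set (lpoint L)) :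
  A' = A -> B `<=` B' -> card_lt A B -> card_lt A' B'.
Proof.
move=> -> sB [AB nBA]; split.
  exact: card_le_trans AB (subset_card_le sB).
by move=> BA; apply: nBA; exact: card_le_trans (subset_card_le sB) BA.
Qed.

Definition Sl L (l : seq (set (lpoint L) * set (lpoint L))) : set L :=
  [set x | exists c, inl c l /\ exists a, (c.1 a \/ c.2 a) /\ supp a x].
Arguments Sl {L} l.

Lemma Sl_fin L (l : seq (set (lpoint L) * set (lpoint L))) :
  (forall c, inl c l -> finite_set c.1 /\ finite_set c.2) -> finite_set (Sl l).
Proof.
elim: l => [|c l IH] hc.
  have -> : Sl (@nil (set (lpoint L) * set (lpoint L))) = set0.
    by apply/seteqP; split=> x // [? []].
  exact: finite_set0.
apply: (sub_finite_set (B := (\bigcup_(a in c.1 `|` c.2) supp a) `|` Sl l)).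
  move=> x [d [/= [<-|id] [a [ha sa]]]]; first by left; exists a.
  by right; exists d; split=> //; exists a.
rewrite finite_setU; split.
  apply: bigcup_finite; last by move=> a _; exact: supp_fin.
  by have [h1 h2] := hc c (or_introl erefl); rewrite finite_setU.
by apply: IH => d id; apply: hc; right.
Qed.

Definition goodc L (c : set (lpoint L) * set (lpoint L)) :=
  finitary c.1 /\ finitary c.2 /\ card_lt c.1 c.2.
Arguments goodc {L} c.

Lemma core L (t0 : lpoint L) n (l : seq (set (lpoint L) * set (lpoint L))) :
  (size l < n)%N -> (forall c, inl c l -> goodc c) ->
  forall i0 : set L, finite_set i0 ->
  exists i : Idx L, i0 `<=` proj1_sig i /\
    forall c, inl c l -> card_lt (restr c.1 i) (restr c.2 i).
Proof.
elim: n l => [//|n IH] l szl hl i0 fi0.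
case: (pselect (exists c, inl c l)) => [nonempty|empty]; last first.
  by exists (exist _ i0 fi0); split=> // c ic; case: empty; exists c.
have [Bm [iBm hBm]] : exists Bm, inl Bm (map snd l) /\
    forall B, inl B (map snd l) -> injle B Bm.
  apply: max_in t0 _ _; have [c ic] := nonempty; exists c.2.
  exact: inl_map_in.
have [cs [ics csB]] : exists cs, inl cs l /\ Bm = cs.2.
  by have [cs [h1 h2]] := inl_map _ _ _ _ _ iBm; exists cs.
have Ble c : inl c l -> injle c.2 Bm by move=> ic; apply: hBm; apply: inl_map_in.
case: (pselect (finite_set Bm)) => [Bfin|Binf].
  have allfin c : inl c l -> finite_set c.1 /\ finite_set c.2.
    move=> ic; have fB : finite_set c.2 := injle_finite _ _ t0 _ _ (Ble c ic) Bfin.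
    have [_ [_ [AB _]]] := hl c ic.
    by split=> //; exact: card_le_finite AB fB.
  have fi : finite_set (i0 `|` Sl l) by rewrite finite_setU; split=> //; apply: Sl_fin.
  exists (exist _ _ fi); split; first by move=> x hx; left.
  move=> c ic; have [_ [_ lt]] := hl c ic.
  have e1 : restr c.1 (exist _ _ fi) = c.1.
    apply/seteqP; split=> [a []//|a ha]; split=> // x hx; right.
    by exists c; split=> //; exists a; split=> //; left.
  have e2 : restr c.2 (exist _ _ fi) = c.2.
    apply/seteqP; split=> [a []//|a ha]; split=> // x hx; right.
    by exists c; split=> //; exists a; split=> //; right.
  by rewrite e1 e2.
have nle A : inl A (map fst l) -> ~ injle Bm A.
  move=> /(inl_map _ _ _ _ _) [c [ic ->]] hle.
  have [_ [_ [_ nBA]]] := hl c ic; apply: nBA.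
  by apply/(injle_card _ _ t0); exact: injle_trans (Ble c ic) hle.
have [F [fF Cinf]] := pigeon _ _ _ Binf nle.
set W := Wof (map fst l) in Cinf.
set C := [set b | Bm b /\ supp b `&` W = F] in Cinf.
have [l1 [l2 el]] := inl_split _ _ _ ics.
set l' := l1 ++ l2.
have szl' : (size l' < n)%N.
  by move: szl; rewrite el /l' !size_cat /= addnS ltnS.
have inl' c : inl c l -> c = cs \/ inl c l'.
  rewrite el => /(inl_cat _ _ _ _) [h|/= [<-|h]]; [right|left|right] => //.
    by apply/inl_cat; left.
  by apply/inl_cat; right.
have hl' c : inl c l' -> goodc c.
  move=> /(inl_cat _ _ _ _) h; apply: hl; rewrite el; apply/inl_cat.
  by case: h => h; [left|right; right].
have fi0' : finite_set (i0 `|` F) by rewrite finite_setU.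
have [i1 [si1 hi1]] := IH l' szl' hl' _ fi0'.
have [m hm] : exists m, (restr cs.1 i1 #<= `I_m)%card.
  apply/finite_set_leP; apply: restr_fin; by have [] := hl cs ics.
have [g [gC gi]] : injle [set: nat] C.
  by apply/(injle_card _ _ t0); apply/infiniteP.
pose i := proj1_sig i1 `|` \bigcup_(k in `I_m.+1) supp (g k).
have fi : finite_set i.
  rewrite /i finite_setU; split; first exact: proj2_sig i1.
  by apply: bigcup_finite; [exact: finite_II|move=> k _; exact: supp_fin].
pose ii := (exist _ i fi : Idx L).
have eqA c : inl c l -> restr c.1 ii = restr c.1 i1.
  move=> ic; apply/seteqP; split=> a [ha sa]; split=> // x hx.
    case: (sa x hx) => // -[k _ hk]; apply: si1; right.
    have [_ <-] := gC k Logic.I; split=> //.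
    exists c.1; split; first exact: inl_map_in.
    by exists a.
  by left; apply: sa.
have subB (c : set (lpoint L) * set (lpoint L)) : restr c.2 i1 `<=` restr c.2 ii.
  by move=> b [hb sb]; split=> // x /sb hx; left.
exists ii; split.
  by move=> x hx; left; apply: si1; left.
have lo : (`I_m.+1 #<= restr cs.2 ii)%card.
  apply/(injle_card _ _ t0); exists g; split.
    move=> k hk; have [Bk _] := gC k Logic.I; split; first by rewrite -csB.
    by move=> x hx; right; exists k.
  by move=> x y _ _; apply: gi.
move=> c /inl' [->|ic'].
  split.
    rewrite (eqA _ ics); apply: card_le_trans hm _.
    apply: (card_le_trans (B := `I_m.+1)); first by rewrite card_le_II.
    exact: lo.
  move=> h; rewrite (eqA _ ics) in h.
  have := card_le_trans (card_le_trans lo h) hm.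
  by rewrite card_le_II ltnn.
have ic : inl c l by rewrite el; apply/inl_cat; have /inl_cat [h|h] := ic'; [left|right; right].
by exact: (card_lt_mono _ _ _ _ _ (eqA c ic) (subB c) (hi1 c ic')).
Qed.


Lemma reduce_Q L n (X : nat -> set (Idx L)) :
  (forall k, (k < n)%N -> Qfam (X k)) ->
  exists l i0, [/\ finite_set i0, (forall c, inl c l -> goodc c) &
    forall i : Idx L, i0 `<=` proj1_sig i ->
      (forall c, inl c l -> card_lt (restr c.1 i) (restr c.2 i)) ->
      forall k, (k < n)%N -> X k i].
Proof.
elim: n => [|n IH] hX.
  exists [::], set0; split=> //; exact: finite_set0.
have [l [i0 [fi0 hl hi]]] : exists l i0, [/\ finite_set i0, (forall c, inl c l -> goodc c) &
    forall i : Idx L, i0 `<=` proj1_sig i ->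
      (forall c, inl c l -> card_lt (restr c.1 i) (restr c.2 i)) ->
      forall k, (k < n)%N -> X k i].
  by apply: IH => k kn; apply: hX; apply: ltnW.
case: (hX n (ltnSn n)) => [[A [B [fA fB lt eX]]]|[d eX]].
  exists ((A, B) :: l), i0; split=> //.
    by move=> c /= [<-|/hl]//; split.
  move=> i si hc k; rewrite ltnS leq_eqVlt => /orP [/eqP ->|kn].
    by rewrite eX; apply: (hc (A, B)); left.
  by apply: hi => // c ic; apply: hc; right.
have fi : finite_set (i0 `|` proj1_sig d) by rewrite finite_setU; split=> //; exact: proj2_sig d.
exists l, (i0 `|` proj1_sig d); split=> //.
move=> i si hc k; rewrite ltnS leq_eqVlt => /orP [/eqP ->|kn].
  by rewrite eX => x hx; apply: si; right.
by apply: hi => // x hx; apply: si; left.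
Qed.

Lemma fipQ L (t0 : lpoint L) : fip (@Qfam L).
Proof.
move=> n X hX.
have [l [i0 [fi0 hl hi]]] := reduce_Q _ _ _ hX.
have [i [si hc]] := core _ t0 _ _ (ltnSn (size l)) hl _ fi0.
by exists i; apply: hi.
Qed.

Theorem mainTheorem9 (L : Type) (HL : ~ finite_set [set: L]) :
  [/\ fip (@Qfam L),
      (exists U : set (set (Idx L)),
          [/\ is_ultrafilter U, fine U & @Qfam L `<=` U])
    & (forall U : set (set (Idx L)),
          is_ultrafilter U -> fine U -> @Qfam L `<=` U ->
          forall A B : set (lpoint L), finitary A -> finitary B ->
            num_le U A B ->
            exists f : lpoint L -> lpoint L,
              (forall a, A a -> B (f a)) /\
              (forall a a', A a -> A a' -> f a = f a' -> a = a'))].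
Proof.
have [x0 _] := infinite_setN0 HL.
pose t0 := Atom x0.
have hfip := fipQ _ t0.
split=> //.
  pose F := [set Y : set (Idx L) | exists n Xs, (forall k, (k < n)%N -> Qfam (Xs k)) /\
     (forall t, (forall k, (k < n)%N -> Xs k t) -> Y t)].
  have FF : ProperFilter F.
    apply: Build_ProperFilter_ex.
      move=> P [n [Xs [hQ hP]]]; have [t ht] := hfip n Xs hQ.
      by exists t; apply: hP.
    split.
    - by exists 0, (fun _ => setT); split.
    - move=> P Q [n1 [X1 [h1 hP]]] [n2 [X2 [h2 hQ]]].
      exists (n1 + n2)%N, (fun k => if (k < n1)%N then X1 k else X2 (k - n1)%N).
      split.
        move=> k kn; case: ifP => kn1; first exact: h1.
        by apply: h2; rewrite ltn_subLR // leqNgt kn1.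
      move=> t ht; split.
        apply: hP => k kn1; have := ht k (ltn_addr _ kn1); by rewrite kn1.
      apply: hQ => k kn2; have := ht (k + n1)%N; rewrite addnC ltn_add2l.
      by move=> /(_ kn2); rewrite ltnNge leq_addr /= addKn.
    - move=> P Q PQ [n [Xs [hQ hP]]]; exists n, Xs; split=> // t ht.
      exact/PQ/hP.
  have [G [UG FG]] := ultraFilterLemma FF.
  have QF : @Qfam L `<=` F.
    by move=> Y QY; exists 1, (fun _ => Y); split=> [k _|t /(_ 0 erefl)].
  exists G; split.
  - split.
    + exact: filterT.
    + exact: filter_not_empty.
    + by move=> X Y; apply: filterI.
    + by move=> X Y GX XY; apply: filterS XY GX.
    + by move=> X; apply: in_ultra_setVsetC.
  - by move=> d; apply/FG/QF; right; exists d.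
  - by move=> Y /QF /FG.
move=> U [UT U0 UI US UC] fU QU A B fA fB hle.
case: (pselect (injle A B)) => [//|nAB].
have [//|BA] := injle_total t0 t0 A B.
have lt : card_lt B A.
  split; first by apply/(injle_card _ _ t0).
  by move=> /(injle_card _ _ t0).
have Uq : U (Qlt B A) by apply: QU; left; exists B, A; split.
exfalso; apply: U0; apply: (US _ _ (UI _ _ hle Uq)) => i [h1 [_ h2]].
exact: h2 h1.
Qed.
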